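(* Let $G$ be a finite abelian group. There is a point $\nu\in\mathcal{P}(G)$ whose basin of attraction (the set of $\mu\in\mathcal{P}(G)$ whose $\omega$-limit set under $Q$ is $\{\nu\}$) is an open and dense subset of $\mathcal{P}(G)$.
   Context: $\mathcal{P}(G)$ is the simplex of probability measures on $G$ with convolution $(\nu*\mu)(\{g\})=\sum_{xy=g}\nu(\{x\})\mu(\{y\})$ and unit $1=\delta_e$. For $t\in[0,1)$, $Q_t(\mu)=(1-t)\mu*(1-t\mu)^{-1}=\sum_{k\ge0}(1-t)t^k\mu^{k+1}$. The $\omega$-limit set of $\mu$ is $\{\nu:\nu=\lim_kQ_{t_k}(\mu)\text{ for some } t_k\to1^-\}$. Such a $\nu$ is called the main attractor point. *)

(* Defs.v *)
From HB Require Import structures.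
From mathcomp Require Import all_boot all_order all_algebra all_fingroup.
From mathcomp Require Import all_classical all_reals all_analysis.
Set Implicit Arguments. Unset Strict Implicit. Unset Printing Implicit Defensive.
Import Order.TTheory GRing.Theory Num.Theory numFieldNormedType.Exports.
Local Open Scope classical_set_scope.
Local Open Scope ring_scope.

Definition isProb (R : realType) (G : finGroupType) (mu : G -> R) : Prop :=
  (forall g, 0 <= mu g) /\ \sum_(g : G) mu g = 1.

Definition conv (R : realType) (G : finGroupType) (nu mu : G -> R) : G -> R :=
  fun g => \sum_(x : G) \sum_(y : G | (x * y)%g == g) nu x * mu y.

Definition delta_e (R : realType) (G : finGroupType) : G -> R :=
  fun g => if g == 1%g then 1 else 0.

Definition cpow (R : realType) (G : finGroupType) (mu : G -> R) (n : nat) : G -> R :=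
  iter n (conv mu) (@delta_e R G).

Definition Qt (R : realType) (G : finGroupType) (t : R) (mu : G -> R) : G -> R :=
  fun g => limn (series (fun k : nat => ((1 - t) * t ^+ k * cpow mu k.+1 g : R))) : R.

Definition omega_limit (R : realType) (G : finGroupType) (mu nu : G -> R) : Prop :=
  exists t : nat -> R,
    (forall k, 0 <= t k < 1) /\ t @ \oo --> (1 : R) /\
    (forall g, (fun k => Qt (t k) mu g) @ \oo --> nu g).

Definition basin (R : realType) (G : finGroupType) (nu mu : G -> R) : Prop :=
  isProb mu /\ (forall nu' : G -> R, omega_limit mu nu' <-> nu' = nu).

(* distance on P(G) (l^1; induces the standard topology of the simplex) *)
Definition pdist (R : realType) (G : finGroupType) (mu mu' : G -> R) : R :=
  \sum_(g : G) `|mu g - mu' g|.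

Definition open_in_P (R : realType) (G : finGroupType) (B : (G -> R) -> Prop) : Prop :=
  (forall mu, B mu -> isProb mu) /\
  forall mu, B mu -> exists2 e : R, 0 < e &
    forall mu', isProb mu' -> pdist mu mu' < e -> B mu'.

Definition dense_in_P (R : realType) (G : finGroupType) (B : (G -> R) -> Prop) : Prop :=
  forall mu, isProb mu -> forall e : R, 0 < e -> exists2 mu', B mu' & pdist mu mu' < e.

(* Main.v *)
Require Import Defs.
From HB Require Import structures.
From mathcomp Require Import all_boot all_order all_algebra all_fingroup.
From mathcomp Require Import all_classical all_reals all_analysis.
Import Order.TTheory GRing.Theory Num.Theory.
Local Open Scope ring_scope.

Module Helpers.
From mathcomp Require Import ring lra.
Import numFieldNormedType.Exports.
Require Import Defs.
Set Implicit Arguments. Unset Strict Implicit.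
Local Open Scope classical_set_scope.

Section Fin.
Variables (R : realType) (G : finGroupType).
Implicit Types (mu nu f h : G -> R) (g x y : G) (a b c : G -> R).

Lemma convE nu mu g : conv nu mu g = \sum_(x : G) nu x * mu (x^-1 * g)%g.
Proof.
rewrite /conv; apply: eq_bigr => x _.
rewrite (big_pred1 (x^-1 * g)%g) // => y /=.
apply/eqP/eqP => [<-|->]; by rewrite ?mulKg ?mulKVg.
Qed.

Lemma sum_shift (F : G -> R) g : \sum_(x : G) F (x^-1 * g)%g = \sum_(x : G) F x.
Proof.
rewrite [RHS](reindex_inj (h := fun x => (x^-1 * g)%g)) //.
by move=> x y /mulIg /invg_inj.
Qed.

Lemma sum_lshift (F : G -> R) y : \sum_(x : G) F (y * x)%g = \sum_(x : G) F x.
Proof. by rewrite [RHS](reindex_inj (mulgI y)). Qed.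

Lemma conv_ge0 nu mu g : (forall x, 0 <= nu x) -> (forall x, 0 <= mu x) ->
  0 <= conv nu mu g.
Proof. by move=> h1 h2; rewrite convE sumr_ge0 // => x _; rewrite mulr_ge0. Qed.

Lemma sum_conv nu mu : \sum_(g : G) conv nu mu g = (\sum_(g : G) nu g) * \sum_(g : G) mu g.
Proof.
under eq_bigr do rewrite convE.
rewrite exchange_big mulr_suml; apply: eq_bigr => x _.
rewrite -mulr_sumr; congr (_ * _).
exact: (sum_lshift mu).
Qed.

Lemma delta_sum : \sum_(g : G) (@delta_e R G) g = 1.
Proof.
rewrite (bigD1 1%g) //= /delta_e eqxx big1 ?addr0 // => g /negPf -> //.
Qed.

Lemma conv_delta mu g : conv mu (@delta_e R G) g = mu g.
Proof.
rewrite convE (bigD1 g) //= /delta_e mulVg eqxx mulr1 big1 ?addr0 // => x xg.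
by rewrite -eq_invg_mul invgK (negPf xg) mulr0.
Qed.

Lemma delta_conv mu g : conv (@delta_e R G) mu g = mu g.
Proof.
rewrite convE (bigD1 1%g) //= /delta_e eqxx mul1r invg1 mul1g big1 ?addr0 //.
by move=> x /negPf ->; rewrite mul0r.
Qed.

Lemma convA a b c g : conv (conv a b) c g = conv a (conv b c) g.
Proof.
rewrite convE; under eq_bigr do rewrite convE mulr_suml.
rewrite exchange_big convE; apply: eq_bigr => y _.
rewrite convE mulr_sumr -(sum_lshift _ y); apply: eq_bigr => z _.
by rewrite mulKg invMg mulgA mulrA.
Qed.

Lemma prob_le1 mu g : isProb mu -> mu g <= 1.
Proof.
move=> [h0 h1]; rewrite -h1 (bigD1 g) //= lerDl sumr_ge0 //.
Qed.

Lemma cpow_prob mu n : isProb mu -> isProb (cpow mu n).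
Proof.
move=> [h0 h1]; elim: n => [|n [i0 i1]] /=.
  by split; [move=> g; rewrite /cpow /= /delta_e; case: ifP|exact: delta_sum].
split; first by move=> g; exact: conv_ge0.
by rewrite sum_conv h1 i1 mulr1.
Qed.

Lemma cpowS mu n g : cpow mu n.+1 g = conv mu (cpow mu n) g.
Proof. by []. Qed.

Lemma cpow1 mu g : cpow mu 1 g = mu g.
Proof. exact: conv_delta. Qed.

Lemma conv_bound mu f (b : R) g : isProb mu -> (forall x, `|f x| <= b) ->
  `|conv mu f g| <= b.
Proof.
move=> [h0 h1] hb; rewrite convE.
apply: (le_trans (ler_norm_sum _ _ _)).
apply: (@le_trans _ _ (\sum_(x : G) mu x * b)).
  apply: ler_sum => x _; rewrite normrM ger0_norm //; exact: ler_wpM2l.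
by rewrite -mulr_suml h1 mul1r.
Qed.

Lemma conv_sub mu f h g : conv mu (fun x => f x - h x) g = conv mu f g - conv mu h g.
Proof. by rewrite !convE -sumrB; apply: eq_bigr => x _; rewrite mulrBr. Qed.

Lemma powQ mu Q d : isProb mu -> (forall g, `|conv mu Q g - Q g| <= d) ->
  forall j g, `|conv (cpow mu j) Q g - Q g| <= j%:R * d.
Proof.
move=> hmu hd; elim=> [|j IH] g.
  by rewrite /cpow /= delta_conv subrr normr0 mul0r.
have -> : conv (cpow mu j.+1) Q g = conv (conv mu (cpow mu j)) Q g.
  by rewrite /conv; apply: eq_bigr => x _; apply: eq_bigr => y _.
rewrite convA.
have -> : conv mu (conv (cpow mu j) Q) g - Q g =
   conv mu (fun x => conv (cpow mu j) Q x - Q x) g + (conv mu Q g - Q g).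
  by rewrite conv_sub addrA subrK.
rewrite mulrSr mulrDl; apply: (le_trans (ler_normD _ _)); apply: lerD => //.
  exact: conv_bound.
by rewrite mul1r.
Qed.

End Fin.

Section Doe.
Variables (R : realType) (G : finGroupType).

Lemma card_pos : (0 < #|G|)%N.
Proof. by apply/card_gt0P; exists 1%g. Qed.

Lemma sum_cst (c : R) : \sum_(x : G) c = c * #|G|%:R.
Proof. by rewrite sumr_const mulr_natr. Qed.

Lemma doe_split (Q rho : G -> R) (c : R) g : \sum_(x : G) Q x = 1 ->
  conv rho Q g = c + \sum_(x : G) (rho x - c) * Q (x^-1 * g)%g.
Proof.
move=> hQ; rewrite convE.
have h : \sum_(x : G) c * Q (x^-1 * g)%g = c by rewrite -mulr_sumr sum_shift hQ mulr1.
rewrite -{1}h.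
rewrite -big_split /=; apply: eq_bigr => x _; rewrite -mulrDl; congr (_ * _); lra.
Qed.

Lemma doeblin (Q rho : G -> R) (c eps : R) :
  (forall x, 0 <= Q x) -> \sum_(x : G) Q x = 1 -> \sum_(x : G) rho x = 1 ->
  0 < c -> (forall x, c <= rho x) ->
  (forall g, `|conv rho Q g - Q g| <= eps) ->
  forall g, `|Q g - #|G|%:R^-1| <= eps / (c * #|G|%:R).
Proof.
move=> Q0 Q1 r1 c0 hc he g.
set N := #|G|%:R.
have N0 : 0 < N by rewrite ltr0n card_pos.
have NN : N * N^-1 = 1 by rewrite divff // gt_eqF.
have cN : 0 < c * N by rewrite mulr_gt0.
have sr : \sum_(x : G) (rho x - c) = 1 - c * N by rewrite sumrB r1 sum_cst.
have [gM _ hM] := @arg_maxP _ _ G 1%g predT Q isT.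
have [gm _ hm] := @arg_minP _ _ G 1%g predT Q isT.
set M := Q [arg max_(i > 1%g) Q i]%O in hM.
set m := Q [arg min_(i < 1%g) Q i]%O in hm.
have up : conv rho Q gM <= c + (1 - c * N) * Q gM.
  rewrite (doe_split rho c) // lerD2l -sr mulr_suml; apply: ler_sum => x _.
  by apply: ler_wpM2l; [rewrite subr_ge0|exact: hM].
have lo : c + (1 - c * N) * Q gm <= conv rho Q gm.
  rewrite (doe_split rho c) // lerD2l -sr mulr_suml; apply: ler_sum => x _.
  by apply: ler_wpM2l; [rewrite subr_ge0|exact: hm].
have eM := he gM; have em := he gm.
rewrite ler_norml in eM; rewrite ler_norml in em.
case/andP: eM => eM1 eM2; case/andP: em => em1 em2.
have kM : c * N * (Q gM - N^-1) <= eps.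
  rewrite mulrBr -[c * N * N^-1]mulrA NN mulr1; lra.
have km : - eps <= c * N * (Q gm - N^-1).
  rewrite mulrBr -[c * N * N^-1]mulrA NN mulr1; lra.
rewrite ler_norml; apply/andP; split.
- rewrite -mulNr ler_pdivrMr // mulrC.
  apply: le_trans km _; apply: ler_wpM2l; first exact: ltW.
  by rewrite lerD2r; apply: hm.
- rewrite ler_pdivlMr // mulrC.
  apply: le_trans kM; apply: ler_wpM2l; first exact: ltW.
  by rewrite lerD2r; apply: hM.
Qed.

End Doe.

Section Ser.
Variables (R : realType) (G : finGroupType).
Implicit Types (mu : G -> R) (g x : G) (t : R).

Lemma uniq_lim (u : nat -> R) (a b : R) : u @ \oo --> a -> u @ \oo --> b -> a = b.
Proof. move=> ha hb. by rewrite -(cvg_lim _ ha) // (cvg_lim _ hb). Qed.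

Lemma sr (u : nat -> R) n : series u n = \sum_(0 <= k < n) u k.
Proof. by rewrite /series. Qed.

Lemma cvg_bigsum (I : finType) (f : I -> nat -> R) (l : I -> R) :
  (forall i, f i @ \oo --> l i) ->
  (fun n => \sum_(i : I) f i n) @ \oo --> \sum_(i : I) l i.
Proof.
move=> hf; rewrite unlock; elim: (index_enum I) => [|i r IH] /=.
  exact: cvg_cst.
exact: cvgD.
Qed.

Definition term t mu g := fun k : nat => ((1 - t) * t ^+ k * cpow mu k.+1 g : R).

Lemma geo t n : \sum_(0 <= k < n) (1 - t) * t ^+ k = 1 - t ^+ n.
Proof.
elim: n => [|n IH]; first by rewrite big_geq // expr0 subrr.
by rewrite big_nat_recr //= IH exprS; lra.
Qed.

Lemma term_ge0 t mu g k : isProb mu -> 0 <= t < 1 -> 0 <= term t mu g k.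
Proof.
move=> hmu /andP[t0 t1]; rewrite /term; apply: mulr_ge0.
  by apply: mulr_ge0; [rewrite subr_ge0; exact: ltW | exact: exprn_ge0].
by case: (cpow_prob k.+1 hmu) => h _; exact: h.
Qed.

Lemma Qt_cvg t mu g : isProb mu -> 0 <= t < 1 ->
  series (term t mu g) @ \oo --> Qt t mu g.
Proof.
move=> hmu ht.
have cv : cvgn (series (term t mu g)).
  apply: nondecreasing_is_cvgn.
    by apply: nondecreasing_series => n _ _; exact: term_ge0.
  exists 1 => _ [n _ <-]; rewrite sr.
  apply: (@le_trans _ _ (\sum_(0 <= k < n) (1 - t) * t ^+ k)).
    apply: ler_sum => k _; rewrite /term ler_piMr //.
      by rewrite mulr_ge0 ?exprn_ge0 ?subr_ge0; case/andP: ht => // *; exact: ltW.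
    exact: prob_le1 (cpow_prob _ hmu).
  rewrite geo lerBlDr lerDl exprn_ge0 //; by case/andP: ht.
exact: cv.
Qed.

Lemma Qt_ge0 t mu g : isProb mu -> 0 <= t < 1 -> 0 <= Qt t mu g.
Proof.
move=> hmu ht; apply: limr_ge; first by move: (@Qt_cvg t mu g hmu ht); rewrite /Qt /term.
apply: nearW => n; rewrite sr sumr_ge0 // => k _; exact: term_ge0.
Qed.

Lemma Qt_sum t mu : isProb mu -> 0 <= t < 1 -> \sum_(g : G) Qt t mu g = 1.
Proof.
move=> hmu ht.
have h1 := cvg_bigsum (fun g => @Qt_cvg t mu g hmu ht).
have e : (fun n => \sum_(g : G) series (term t mu g) n) = (fun n => 1 - t ^+ n).
  apply: funext => n; rewrite -geo.
  under eq_bigr do rewrite sr.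
  rewrite exchange_big /=; apply: eq_bigr => k _.
  rewrite /term -mulr_sumr; case: (cpow_prob k.+1 hmu) => _ ->.
  by rewrite mulr1.
rewrite e in h1; apply: (uniq_lim h1).
rewrite -[X in _ --> X]subr0; apply: cvgB; first exact: cvg_cst.
apply: cvg_expr; case/andP: ht => t0 t1; rewrite ger0_norm //.
Qed.

Lemma Qt_le1 t mu g : isProb mu -> 0 <= t < 1 -> Qt t mu g <= 1.
Proof.
move=> hmu ht; apply: prob_le1; split; [move=> h; exact: Qt_ge0|exact: Qt_sum].
Qed.

Lemma Qt_conv t mu g : isProb mu -> 0 <= t < 1 ->
  t * conv mu (fun h => Qt t mu h) g = Qt t mu g - (1 - t) * mu g.
Proof.
move=> hmu ht.
set b := fun n => conv mu (fun h => series (term t mu h) n) g.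
have hb : b @ \oo --> conv mu (fun h => Qt t mu h) g.
  rewrite /b; under eq_fun do rewrite convE.
  rewrite convE; apply: (cvg_bigsum (f := fun x n => mu x * series (term t mu (x^-1 * g)%g) n)) => x.
  apply: cvgMl_tmp; exact: Qt_cvg.
have e : (fun n => t * b n) = (fun n => series (term t mu g) n.+1 - (1 - t) * mu g).
  apply: funext => n; rewrite /b sr big_nat_recl // /term expr0 mulr1 cpow1.
  rewrite [(1 - t) * mu g + _]addrC addrK convE.
  rewrite mulr_sumr; rewrite /series /=; under eq_bigr => x _ do rewrite mulr_sumr mulr_sumr.
  rewrite exchange_big /=; apply: eq_bigr => k _.
  rewrite [conv mu (conv _ _) g]convE mulr_sumr; apply: eq_bigr => x _.
  by rewrite exprS; ring.
apply: (uniq_lim (u := fun n => t * b n)); first exact: cvgMl_tmp.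
rewrite e; apply: cvgB; last exact: cvg_cst.
by rewrite (cvg_shiftS (fun n => series (term t mu g) n)); exact: Qt_cvg.
Qed.

End Ser.

Section Main.
Variables (R : realType) (G : finGroupType).
Implicit Types (mu : G -> R) (g x : G) (t : R).

Definition Pg mu := forall g, exists n, 0 < cpow mu n.+1 g.

Lemma sum_pos_ex (F : G -> R) : (forall x, 0 <= F x) -> 0 < \sum_(x : G) F x ->
  exists x, 0 < F x.
Proof.
move=> F0 Fp.
have : \sum_(x : G) F x != 0 by rewrite gt_eqF.
rewrite psumr_neq0 // => /hasP [x _ /= hx]; by exists x.
Qed.

Lemma term_le (F : G -> R) y : (forall x, 0 <= F x) -> F y <= \sum_(x : G) F x.
Proof. by move=> F0; rewrite (bigD1 y) //= lerDl sumr_ge0. Qed.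

Lemma bound mu : isProb mu -> Pg mu -> exists K : R, forall t, 0 <= t < 1 ->
  forall g, `|Qt t mu g - #|G|%:R^-1| <= K * (1 - t).
Proof.
move=> hmu hP.
have [n hn] := boolp.choice hP.
set N := #|G|%:R.
have N0 : 0 < N by rewrite ltr0n card_pos.
have NN : N^-1 * N = 1 by rewrite mulVf // gt_eqF.
have [x0 _ hx0] := @arg_minP _ _ G 1%g predT (fun x => cpow mu (n x).+1 x) isT.
set c := N^-1 * cpow mu (n x0).+1 x0.
have c0 : 0 < c by rewrite mulr_gt0 ?invr_gt0.
set rho := fun x => N^-1 * \sum_(g0 : G) cpow mu (n g0).+1 x.
have cp0 : forall k x, 0 <= cpow mu k x by move=> k x; case: (cpow_prob k hmu) => h _; exact: h.
have r1 : \sum_(x : G) rho x = 1.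
  rewrite /rho -mulr_sumr exchange_big /=.
  under eq_bigr => g0 _ do rewrite (proj2 (cpow_prob (n g0).+1 hmu)).
  by rewrite sum_cst mul1r NN.
have rc : forall x, c <= rho x.
  move=> x; rewrite /rho /c ler_pM2l ?invr_gt0 //.
  have /= h := hx0 x isT; apply: le_trans h _; exact: (term_le (F := fun g0 => cpow mu (n g0).+1 x)).
set J := \sum_(g0 : G) (n g0).+1%:R : R.
have J0 : 0 <= J by rewrite sumr_ge0.
set K1 := N^-1 * J * 2 / (c * N).
have K10 : 0 <= K1 by rewrite /K1 !(mulr_ge0, invr_ge0, ltW N0, ltW c0).
exists (K1 + 4) => t ht g.
have t1 : 0 <= 1 - t by case/andP: ht => _ t1; rewrite subr_ge0 ltW.
set Q := fun h => Qt t mu h.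
have Q0 : forall h, 0 <= Q h by move=> h; exact: Qt_ge0.
have Q1 : forall h, Q h <= 1 by move=> h; exact: Qt_le1.
have mu1 : forall h, mu h <= 1 by move=> h; exact: prob_le1.
have mu0 : forall h, 0 <= mu h by case: hmu.
case: (leP (2^-1) t) => th; last first.
  apply: (@le_trans _ _ 2).
    have hN : N^-1 <= 1 by rewrite invf_le1 // /N ler1n card_pos.
    have hN0 : 0 <= N^-1 by rewrite invr_ge0 ltW.
    move: (Q0 g) (Q1 g); rewrite /Q => a b; rewrite ler_norml; lra.
  rewrite mulrDl; have : 0 <= K1 * (1 - t) by rewrite mulr_ge0.
  lra.
have hd : forall h, `|conv mu Q h - Q h| <= 2 * (1 - t).
  move=> h; have e := Qt_conv h hmu ht.
  have e2 : t * (conv mu Q h - Q h) = (1 - t) * (Q h - mu h).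
    rewrite /Q mulrBr e; ring.
  have : t * `|conv mu Q h - Q h| <= 1 - t.
    have t0 : 0 <= t by case/andP: ht.
    rewrite -[X in X * _ <= _](ger0_norm t0) -normrM e2 normrM (ger0_norm t1).
    rewrite -[X in _ <= X]mulr1 ler_wpM2l //.
    have := Q0 h; have := Q1 h; have := mu0 h; have := mu1 h.
    rewrite ler_norml; lra.
  have := normr_ge0 (conv mu Q h - Q h).
  set a := `|_|. move=> a0 ha.
  have : 2^-1 * a <= t * a by rewrite ler_wpM2r.
  lra.
have hrho : forall h, `|conv rho Q h - Q h| <= N^-1 * (J * (2 * (1 - t))).
  move=> h.
  have -> : conv rho Q h - Q h =
      N^-1 * \sum_(g0 : G) (conv (cpow mu (n g0).+1) Q h - Q h).
    rewrite sumrB sum_cst mulrBr [N^-1 * (_ * N)]mulrCA NN mulr1; congr (_ - _).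
    rewrite convE /rho; under eq_bigr => x _ do rewrite -mulrA mulr_suml.
    rewrite -mulr_sumr exchange_big /=; congr (_ * _); apply: eq_bigr => g0 _.
    by rewrite convE.
  have Ni : 0 <= N^-1 by rewrite invr_ge0 ltW.
  rewrite normrM (ger0_norm Ni) ler_pM2l ?invr_gt0 //.
  apply: (le_trans (ler_norm_sum _ _ _)).
  rewrite /J mulr_suml; apply: ler_sum => g0 _.
  exact: powQ.
have := doeblin Q0 (Qt_sum hmu ht) r1 c0 rc hrho g.
have -> : N^-1 * (J * (2 * (1 - t))) / (c * N) = K1 * (1 - t).
  by rewrite /K1; field; rewrite ?gt_eqF.
move=> h; apply: le_trans h _; rewrite mulrDl lerDl mulr_ge0 //.
Qed.

Definition U : G -> R := fun _ => #|G|%:R^-1.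

Lemma U_prob : isProb U.
Proof.
have N0 : 0 < #|G|%:R :> R by rewrite ltr0n card_pos.
split; first by move=> g; rewrite /U invr_ge0 ltW.
by rewrite sum_cst mulVf // gt_eqF.
Qed.

Lemma conv_U mu (tk : nat -> R) : isProb mu -> Pg mu ->
  (forall k, 0 <= tk k < 1) -> tk @ \oo --> (1 : R) ->
  forall g, (fun k => Qt (tk k) mu g) @ \oo --> U g.
Proof.
move=> hmu hP ht htc g.
have [K hK] := bound hmu hP.
have e0 : (fun k => K * (1 - tk k)) @ \oo --> (0 : R).
  rewrite -(mulr0 K) -(subrr 1).
  apply: cvgMl_tmp; apply: cvgB => //; exact: cvg_cst.
apply: (@squeeze_cvgr _ _ _ _ (fun k => U g - K * (1 - tk k)) (fun k => U g + K * (1 - tk k))).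
- apply: nearW => k; have := hK _ (ht k) g; rewrite /U ler_distl.
  by case/andP => a b; apply/andP; split; lra.
- rewrite -[X in _ --> X]subr0; apply: cvgB => //; exact: cvg_cst.
- rewrite -[X in _ --> X]addr0; apply: cvgD => //; exact: cvg_cst.
Qed.

Lemma P_basin mu : isProb mu -> Pg mu -> basin U mu.
Proof.
move=> hmu hP; split => // nu'; split.
- move=> [tk [ht [htc hq]]]; apply: boolp.funext => g.
  have h1 := hq g; have h2 := conv_U (g:=g) hmu hP ht htc. exact: (uniq_lim h1 h2).
- move=> ->; exists (fun k => 1 - harmonic k); split; [|split].
  + move=> k; rewrite /harmonic /=; apply/andP; split.
      by rewrite subr_ge0 invf_le1 ?ler1n // ltr0n.
    by rewrite ltrBlDr ltrDl invr_gt0 ltr0n.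
  + rewrite -[X in _ --> X]subr0; apply: cvgB; first exact: cvg_cst.
    exact: cvg_harmonic.
  + move=> g; apply: conv_U => // [k|].
      rewrite /harmonic /=; apply/andP; split.
        by rewrite subr_ge0 invf_le1 ?ler1n // ltr0n.
      by rewrite ltrBlDr ltrDl invr_gt0 ltr0n.
    rewrite -[X in _ --> X]subr0; apply: cvgB; first exact: cvg_cst.
    exact: cvg_harmonic.
Qed.

Lemma basin_P mu : basin U mu -> Pg mu.
Proof.
move=> [hmu hb] g.
have [tk [ht [htc hq]]] := proj2 (hb U) erefl.
have [//|nP] := boolp.pselect (exists n, 0 < cpow mu n.+1 g).
exfalso.
have z : forall k, Qt (tk k) mu g = 0.
  move=> k; apply: (uniq_lim (@Qt_cvg _ _ (tk k) mu g hmu (ht k))).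
  have -> : series (term (tk k) mu g) = fun _ => 0.
    apply: boolp.funext => n; rewrite sr big1 // => i _.
    have c0 : cpow mu i.+1 g = 0.
      apply/eqP; rewrite eq_le; apply/andP; split; last first.
        by case: (cpow_prob i.+1 hmu) => h _; exact: h.
      rewrite leNgt; apply/negP => h; apply: nP; by exists i.
    by rewrite /term c0 mulr0.
  exact: cvg_cst.
have := hq g; under eq_fun do rewrite z.
move=> h0; have := uniq_lim (cvg_cst (0 : R)) h0.
rewrite /U => e.
have N0 : 0 < #|G|%:R :> R by rewrite ltr0n card_pos.
by move: N0; rewrite -invr_gt0 -e ltxx.
Qed.

Lemma supp_mono mu mu' : isProb mu -> isProb mu' ->
  (forall x, 0 < mu x -> 0 < mu' x) -> forall n g, 0 < cpow mu n g -> 0 < cpow mu' n g.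
Proof.
move=> hmu hmu' hs; elim=> [|n IH] g //.
rewrite !cpowS !convE => hp.
have [x hx] : exists x, 0 < mu x * cpow mu n (x^-1 * g)%g.
  apply: sum_pos_ex => // x; apply: mulr_ge0; first by case: hmu.
  by case: (cpow_prob n hmu) => h _; exact: h.
have m0 : 0 <= mu x by case: hmu.
have c0 : 0 <= cpow mu n (x^-1 * g)%g by case: (cpow_prob n hmu) => h _; exact: h.
have mx : 0 < mu x.
  rewrite lt0r m0 andbT; apply/negP => /eqP h; by rewrite h mul0r ltxx in hx.
have cx : 0 < cpow mu n (x^-1 * g)%g.
  rewrite lt0r c0 andbT; apply/negP => /eqP h; by rewrite h mulr0 ltxx in hx.
apply: (lt_le_trans _ (term_le (F := fun x => mu' x * cpow mu' n (x^-1 * g)%g) x _)).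
  by rewrite /= mulr_gt0 // ?hs // IH.
move=> y; apply: mulr_ge0; first by case: hmu'.
by case: (cpow_prob n hmu') => h _; exact: h.
Qed.

Lemma basin_open : open_in_P (basin U).
Proof.
split; first by move=> mu [].
move=> mu hb; have hP := basin_P hb; have hmu := hb.1.
have mu0 : forall x, 0 <= mu x by case: hmu.
have [x0 hx0] : exists x, 0 < mu x.
  by apply: sum_pos_ex => //; rewrite (proj2 hmu) ltr01.
have [m hm hmin] := @arg_minP _ _ G x0 [pred x | 0 < mu x] (fun x => mu x) hx0.
exists (mu m) => // mu' hmu' hd.
apply: P_basin => // g; have [n hn] := hP g; exists n.
apply: (supp_mono hmu hmu') hn => x hx.
have := hmin x hx => /= hmx.
have : `|mu x - mu' x| <= pdist mu mu'.
  exact: (term_le (F := fun g => `|mu g - mu' g|)).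
rewrite ler_norml => /andP[a b]; lra.
Qed.

Lemma basin_dense : dense_in_P (basin U).
Proof.
move=> mu hmu e e0.
have mu0 : forall x, 0 <= mu x by case: hmu.
set N := #|G|%:R : R.
have N0 : 0 < N by rewrite ltr0n card_pos.
have Ni : 0 < N^-1 by rewrite invr_gt0.
set s := Num.min (e / 4) 1.
have s0 : 0 < s by rewrite lt_min ltr01 andbT divr_gt0.
have s1 : s <= 1 by rewrite ge_min lexx orbT.
have se : s <= e / 4 by rewrite ge_min lexx.
set mu' := fun g => (1 - s) * mu g + s * N^-1.
have hmu' : isProb mu'.
  split.
    move=> g; rewrite /mu' addr_ge0 // ?mulr_ge0 ?subr_ge0 // ltW //.
  rewrite /mu' big_split /= -!mulr_sumr (proj2 hmu) sum_cst mulVf ?gt_eqF //.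
  ring.
exists mu'.
  apply: P_basin => // g; exists 0%N; rewrite cpow1 /mu'.
  have : 0 <= (1 - s) * mu g by rewrite mulr_ge0 // subr_ge0.
  have : 0 < s * N^-1 by rewrite mulr_gt0.
  lra.
rewrite /pdist.
apply: (@le_lt_trans _ _ (\sum_(g : G) (s * mu g + s * N^-1))).
  apply: ler_sum => g _.
  have -> : mu g - mu' g = s * mu g - s * N^-1 by rewrite /mu'; ring.
  have := mulr_ge0 (ltW s0) (mu0 g); have := mulr_gt0 s0 Ni.
  rewrite ler_norml; lra.
rewrite big_split /= -!mulr_sumr (proj2 hmu) sum_cst mulVf ?gt_eqF //.
lra.
Qed.

End Main.

End Helpers.

Theorem mainTheorem19 (R : realType) (G : finGroupType) (HG : abelian [set: G]) :
  exists nu : G -> R, isProb nu /\ open_in_P (basin nu) /\ dense_in_P (basin nu).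
Proof.
exists (@Helpers.U R G); split; first exact: Helpers.U_prob.
by split; [exact: Helpers.basin_open|exact: Helpers.basin_dense].
Qed.
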